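(* Let $A\in\mathbb{R}^{n\times n}$ be stable and Metzler. Let $\mathcal{C}_1,\dots,\mathcal{C}_r$ be nonempty, pairwise disjoint subsets of $\{1,\dots,n\}$ whose union is $\{1,\dots,n\}$, let $\Pi\in\mathbb{R}^{n\times r}$ with $\Pi_{ij}=1$ if $i\in\mathcal{C}_j$ and $0$ otherwise, let $\alpha\ge 0$, and let $A_r^{(0)}:=(\Pi^\top\Pi)^{-1}\Pi^\top A\Pi-\alpha I_r$ be stable and irreducible. Let $\mu_1$ be the real eigenvalue of $A_r^{(0)}$ with $\mu_1<0$ and ${\rm Re}(\mu)<\mu_1$ for every other eigenvalue $\mu$ of $A_r^{(0)}$, and let $v_1,w_1$ be positive vectors with $A_r^{(0)}v_1=\mu_1 v_1$, $w_1^\top A_r^{(0)}=\mu_1 w_1^\top$, $w_1^\top v_1=1$. For any real $\epsilon>0$ with $\mu_1+\epsilon\le 0$, define $$\bar{A}_r:=A_r^{(0)}-(\mu_1+\epsilon)v_1w_1^\top .$$ Then for any real $\gamma>0$ satisfying $-\gamma I_r\le A_r^{(0)}$ (entrywise), every matrix in $$S_{A_r}(A_r^{(0)},\epsilon,\gamma):=\{A_r\in\mathbb{R}^{r\times r}\,:\,-\gamma I_r\le A_r\le \bar{A}_r\}$$ is stable and Metzler, and $A_r^{(0)}\in S_{A_r}(A_r^{(0)},\epsilon,\gamma)$. Moreover, for every $A_r\in S_{A_r}(A_r^{(0)},\epsilon,\gamma)$, the real parts of all eigenvalues of $A_r$ are less than or equal to $-\epsilon$.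
   Context: For matrices $M,N$ of the same size, $M\le N$ means $M_{ij}\le N_{ij}$ for all $(i,j)$. A matrix is stable if all its eigenvalues have negative real part, and Metzler if all its off-diagonal entries are nonnegative. $A_r^{(0)}$ irreducible means the directed graph on $\{1,\dots,r\}$ with an edge $i\to j$ whenever $i\ne j$ and $(A_r^{(0)})_{ij}\ne 0$ is strongly connected. (Such $\mu_1,v_1,w_1$ exist under these hypotheses.) *)

(* Defs.v *)
(* reals modelled by an arbitrary real closed field R,
   complex numbers by R[i] (mathcomp-real-closed). *)
From HB Require Import structures.
From mathcomp Require Import all_boot all_order all_algebra.
From mathcomp Require Import complex.
Set Implicit Arguments. Unset Strict Implicit. Unset Printing Implicit Defensive.
Import Order.TTheory GRing.Theory Num.Theory.
Local Open Scope ring_scope.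

Definition cmx (R : rcfType) (m n : nat) (A : 'M[R]_(m, n)) : 'M[R[i]]_(m, n) :=
  map_mx (real_complex R) A.

Definition ceig (R : rcfType) (n : nat) (A : 'M[R]_n) (z : R[i]) : bool :=
  eigenvalue (cmx A) z.

Definition stable (R : rcfType) (n : nat) (A : 'M[R]_n) : Prop :=
  forall z : R[i], ceig A z -> complex.Re z < 0.

Definition metzler (R : rcfType) (n : nat) (A : 'M[R]_n) : Prop :=
  forall i j : 'I_n, i != j -> 0 <= A i j.

Definition mxle (R : rcfType) (m n : nat) (M N : 'M[R]_(m, n)) : Prop :=
  forall i j, M i j <= N i j.

Definition mx_irreducible (R : rcfType) (n : nat) (A : 'M[R]_n) : Prop :=
  forall i j : 'I_n, connect (fun k l : 'I_n => (k != l) && (A k l != 0)) i j.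

Definition clustermx (R : rcfType) (n r : nat) (C : 'I_r -> {set 'I_n}) : 'M[R]_(n, r) :=
  \matrix_(i < n, j < r) (if i \in C j then 1 else 0).

Definition Ar0 (R : rcfType) (n r : nat) (A : 'M[R]_n) (C : 'I_r -> {set 'I_n}) (alpha : R)
  : 'M[R]_r :=
  let Pi := clustermx R C in
  invmx (Pi^T *m Pi) *m Pi^T *m A *m Pi - alpha%:M.

Definition in_S (R : rcfType) (r : nat) (Abar : 'M[R]_r) (gamma : R) (M : 'M[R]_r) : Prop :=
  mxle (- gamma%:M) M /\ mxle M Abar.

(* Main.v *)
Require Import Defs.
From HB Require Import structures.
From mathcomp Require Import all_boot all_order all_algebra.
From mathcomp Require Import complex lra.
Import Order.TTheory GRing.Theory Num.Theory.
Local Open Scope ring_scope.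

Lemma key (R : rcfType) r (M : 'M[R]_r) (v : 'cV[R]_r) (g lam : R) :
  (forall i j, i != j -> 0 <= M i j) -> (forall i, - g <= M i i) ->
  (forall i, 0 < v i 0) ->
  (forall i, \sum_j M i j * v j 0 <= lam * v i 0) ->
  forall z, ceig M z -> complex.Re z <= lam.
Proof.
move=> Moff Mdiag vpos Mv z /eigenvalueP [u Hu u0].
pose N := M + g%:M.
have N0 : forall i j, 0 <= N i j.
  move=> i j; rewrite /N !mxE; case: eqVneq => [->|/Moff hij].
    by rewrite mulr1n -lerBlDr sub0r.
  by rewrite mulr0n addr0.
have HN : u *m cmx N = (z + (g%:C)%C) *: u.
  by rewrite /cmx /N map_mxD map_scalar_mx mulmxDr -/(cmx M) Hu mul_mx_scalar scalerDl.
have Ej : forall j, (z + (g%:C)%C) * u 0 j = \sum_i u 0 i * ((N i j)%:C)%C.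
  move=> j; move/matrixP: HN => /(_ 0 j); rewrite !mxE => <-.
  by apply: eq_bigr => i _; rewrite mxE.
have Nv : forall i, \sum_j N i j * v j 0 <= (lam + g) * v i 0.
  move=> i; rewrite /N.
  under eq_bigr => j _ do rewrite !mxE mulrDl.
  rewrite big_split /= mulrDl lerD //.
  rewrite (bigD1 i) //= eqxx mulr1n big1 ?addr0 // => j /negbTE.
  by rewrite eq_sym => ->; rewrite mulr0n mul0r.
pose S := \sum_j `|u 0 j| * ((v j 0)%:C)%C.
have Spos : 0 < S.
  have [j uj] : exists j, u 0 j != 0.
    apply/existsP; move: u0; apply: contraR; rewrite negb_exists => /forallP H.
    by apply/eqP/matrixP => a b; rewrite (ord1 a) mxE; apply/eqP/negPn/H.
  rewrite /S (bigD1 j) //= ltr_wpDr //.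
    by apply: sumr_ge0 => k _; rewrite mulr_ge0 // ler0c ltW.
  by rewrite mulr_gt0 ?normr_gt0 // ltcR.
have H1 : `|z + (g%:C)%C| * S <= ((lam + g)%:C)%C * S.
  rewrite /S mulr_sumr.
  apply: (@le_trans _ _ (\sum_j \sum_i `|u 0 i| * ((N i j)%:C)%C * ((v j 0)%:C)%C)).
    apply: ler_sum => j _; rewrite mulrA -normrM Ej.
    rewrite -mulr_suml; apply: ler_wpM2r; first by rewrite ler0c ltW.
    apply: (le_trans (ler_norm_sum _ _ _)); apply: ler_sum => i _.
    by rewrite normrM (@ger0_norm _ ((N i j)%:C)%C) ?ler0c.
  rewrite exchange_big /=; rewrite mulr_sumr; apply: ler_sum => i _.
  under eq_bigr => j _ do rewrite -mulrA.
  rewrite -mulr_sumr mulrCA ler_wpM2l ?normr_ge0 //.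
  have -> : \sum_j ((N i j)%:C)%C * ((v j 0)%:C)%C = ((\sum_j N i j * v j 0)%:C)%C.
    by rewrite rmorph_sum; apply: eq_bigr => j _; rewrite rmorphM.
  by rewrite -rmorphM lecR.
have H2 : `|z + (g%:C)%C| <= ((lam + g)%:C)%C by rewrite -(ler_pM2r Spos).
move: H2; case: z {Hu Ej HN H1} => a b.
rewrite normc_def lecR /= addr0 => H2.
rewrite -(lerD2r g); apply: le_trans H2.
rewrite (le_trans (ler_norm _)) // -sqrtr_sqr ler_wsqrtr // lerDl sqr_ge0 //.
Qed.

Theorem theorem1 (R : rcfType) (n r : nat) (A : 'M[R]_n)
  (C : 'I_r -> {set 'I_n}) (alpha : R)
  (mu1 : R) (v1 w1 : 'cV[R]_r) (eps gamma : R) :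
  stable A -> metzler A ->
  (forall j, C j != set0) ->
  (forall j k, j != k -> [disjoint C j & C k]) ->
  (forall i : 'I_n, exists j, i \in C j) ->
  0 <= alpha ->
  stable (Ar0 A C alpha) -> mx_irreducible (Ar0 A C alpha) ->
  mu1 < 0 -> ceig (Ar0 A C alpha) (mu1%:C)%C ->
  (forall z : R[i], ceig (Ar0 A C alpha) z -> z != (mu1%:C)%C -> complex.Re z < mu1) ->
  (forall i, 0 < v1 i 0) -> (forall i, 0 < w1 i 0) ->
  Ar0 A C alpha *m v1 = mu1 *: v1 ->
  w1^T *m Ar0 A C alpha = mu1 *: w1^T ->
  w1^T *m v1 = 1%:M ->
  0 < eps -> mu1 + eps <= 0 ->
  0 < gamma -> mxle (- gamma%:M) (Ar0 A C alpha) ->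
  let Abar := Ar0 A C alpha - (mu1 + eps) *: (v1 *m w1^T) in
  (forall M, in_S Abar gamma M -> stable M /\ metzler M) /\
  in_S Abar gamma (Ar0 A C alpha) /\
  (forall M, in_S Abar gamma M ->
     forall z : R[i], ceig M z -> complex.Re z <= - eps).
Proof.
move=> _ _ _ _ _ _ _ _ _ _ _ vpos wpos Hv Hw Hwv epos mueps gpos Hg Abar.
set B := Ar0 A C alpha in Hv Hw Hg Abar *.
have Av : Abar *m v1 = - eps *: v1.
  rewrite /Abar mulmxBl Hv -scalemxAl -mulmxA Hwv mulmx1 -scalerBl.
  by congr (_ *: _); rewrite opprD addNKr.
have Main : forall M, in_S Abar gamma M ->
     forall z : R[i], ceig M z -> complex.Re z <= - eps.
  move=> M [HL HU]; apply: (@key _ _ M v1 gamma (- eps) _ _ vpos).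
  - move=> i j ij; have := HL i j; rewrite !mxE (negbTE ij) mulr0n oppr0 //.
  - by move=> i; have := HL i i; rewrite !mxE eqxx mulr1n.
  - move=> i; apply: (@le_trans _ _ ((Abar *m v1) i 0)); last by rewrite Av mxE.
    rewrite [X in _ <= X]mxE.
    by apply: ler_sum => j _; exact: (ler_wpM2r (ltW (vpos j)) (HU i j)).
split; last split => //.
  move=> M HM; split.
    by move=> z /(Main M HM) h; apply: le_lt_trans h _; rewrite oppr_lt0.
  move=> i j ij; have := (proj1 HM) i j; rewrite !mxE (negbTE ij) mulr0n oppr0 //.
split => // i j; rewrite /Abar !mxE big_ord1 !mxE.
have h : 0 <= - ((mu1 + eps) * (v1 i 0 * w1 j 0)).
  by rewrite -mulNr mulr_ge0 ?oppr_ge0 // mulr_ge0 // ltW.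
move: h; set X := (\sum_j0 _ - _); set Y := (_ * _); lra.
Qed.
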